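(* Let $f_1,\dots,f_M:\mathbb{R}\to[0,1]$ be continuous strictly increasing cumulative distribution functions, $w_i>0$ with $\sum_{i=1}^M w_i=1$, and $F(x)=\sum_{i=1}^M w_i f_i(x)$. Let $\overline{w}_i=1-w_i$. Then for $p\in(0,1)$, \[\max_{i:\ p-\overline{w}_i\ge 0} f_i^{-1}(p-\overline{w}_i)\le F^{-1}(p)\le \min_{i:\ p+\overline{w}_i\le 1} f_i^{-1}(p+\overline{w}_i).\]
   Context: For a continuous strictly increasing cdf $G$, $G^{-1}(q)$ denotes the $q$-quantile of $G$, i.e. the $x$ with $G(x)=q$ (with $G^{-1}(0)=-\infty$, $G^{-1}(1)=+\infty$ where applicable). *)

(* Defs.v *)
From Stdlib Require Import Reals ClassicalEpsilon.
From Coquelicot Require Import Coquelicot.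
Open Scope R_scope.

Definition is_cdf (G : R -> R) : Prop :=
  (forall x, 0 <= G x <= 1) /\
  (forall x y, x <= y -> G x <= G y) /\
  (forall x, filterlim G (at_right x) (locally (G x))) /\
  filterlim G (Rbar_locally m_infty) (locally 0) /\
  filterlim G (Rbar_locally p_infty) (locally 1).

Definition strictly_increasing (G : R -> R) : Prop :=
  forall x y, x < y -> G x < G y.

Definition quantile (G : R -> R) (q : R) : Rbar :=
  if Rle_dec q 0 then m_infty
  else if Rle_dec 1 q then p_infty
  else Finite (epsilon (inhabits 0) (fun x => G x = q)).

Definition mixture (M : nat) (w : nat -> R) (f : nat -> R -> R) (x : R) : R :=
  sum_f_R0 (fun i => w i * f i x) (M - 1).

(* Main.v *)
Require Import Defs.
From Stdlib Require Import Reals Lra Lia ClassicalEpsilon.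
From Coquelicot Require Import Coquelicot.
Open Scope R_scope.

Lemma lim_lo (G : R -> R) q : filterlim G (Rbar_locally m_infty) (locally 0) -> 0 < q ->
  exists x, G x < q.
Proof.
  intros H Hq.
  assert (HB : locally 0 (fun y => Rabs (y - 0) < q)).
  { exists (mkposreal q Hq). intros y Hy. exact Hy. }
  destruct (H _ HB) as [Mx HM].
  exists (Mx - 1). specialize (HM (Mx - 1) ltac:(lra)). simpl in HM.
  apply Rabs_def2 in HM. lra.
Qed.

Lemma lim_hi (G : R -> R) q : filterlim G (Rbar_locally p_infty) (locally 1) -> q < 1 ->
  exists x, q < G x.
Proof.
  intros H Hq.
  assert (Hq' : 0 < 1 - q) by lra.
  assert (HB : locally 1 (fun y => Rabs (y - 1) < 1 - q)).
  { exists (mkposreal _ Hq'). intros y Hy. exact Hy. }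
  destruct (H _ HB) as [Mx HM].
  exists (Mx + 1). specialize (HM (Mx + 1) ltac:(lra)). simpl in HM.
  apply Rabs_def2 in HM. lra.
Qed.

Lemma exists_sol (G : R -> R) q : (forall x, continuity_pt G x) ->
  (exists x, G x < q) -> (exists y, q < G y) -> exists z, G z = q.
Proof.
  intros Hc [x Hx] [y Hy].
  assert (Hc' : continuity (fun t => G t - q)).
  { intro t. apply continuity_pt_minus; [apply Hc | apply continuity_pt_const; intros a b; reflexivity]. }
  destruct (Rtotal_order x y) as [Hxy | [Hxy | Hxy]].
  - destruct (IVT _ x y Hc' Hxy ltac:(lra) ltac:(lra)) as [z [_ Hz]]. exists z; lra.
  - subst; lra.
  - set (g := fun t => - (G t - q)).
    assert (Hg : continuity g).
    { intro t. apply continuity_pt_opp. apply Hc'. }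
    destruct (IVT g y x Hg Hxy ltac:(unfold g; lra) ltac:(unfold g; lra)) as [z [_ Hz]].
    exists z; unfold g in Hz; lra.
Qed.

Lemma quantile_spec (G : R -> R) q : 0 < q < 1 -> (exists x, G x = q) ->
  exists x, quantile G q = Finite x /\ G x = q.
Proof.
  intros Hq Hex. unfold quantile.
  destruct (Rle_dec q 0); [lra|]. destruct (Rle_dec 1 q); [lra|].
  exists (epsilon (inhabits 0) (fun x => G x = q)). split; [reflexivity|].
  apply epsilon_spec. exact Hex.
Qed.

Lemma term_le (a : nat -> R) n i : (forall j, (j <= n)%nat -> 0 <= a j) -> (i <= n)%nat ->
  a i <= sum_f_R0 a n.
Proof.
  induction n; intros Ha Hi.
  - simpl. replace i with 0%nat by lia. lra.
  - simpl. destruct (Nat.eq_dec i (S n)).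
    + subst. assert (0 <= sum_f_R0 a n).
      { clear IHn. assert (G : forall m, (m <= n)%nat -> 0 <= sum_f_R0 a m).
        { induction m; intros Hm; simpl; [apply Ha; lia|].
          assert (0 <= a (S m)) by (apply Ha; lia). specialize (IHm ltac:(lia)). lra. }
        apply G; lia. }
      lra.
    + assert (a i <= sum_f_R0 a n) by (apply IHn; [intros; apply Ha; lia | lia]).
      assert (0 <= a (S n)) by (apply Ha; lia). lra.
Qed.

Lemma sum_diff (w : nat -> R) (f : nat -> R -> R) x n :
  sum_f_R0 (fun j => w j * (1 - f j x)) n = sum_f_R0 w n - sum_f_R0 (fun j => w j * f j x) n.
Proof. induction n; simpl; [ring | rewrite IHn; ring]. Qed.

Lemma sum_lim (w : nat -> R) (f : nat -> R -> R) (x : Rbar) (L : nat -> R) n :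
  (forall j, (j <= n)%nat -> is_lim (f j) x (L j)) ->
  is_lim (fun y => sum_f_R0 (fun i => w i * f i y) n) x (sum_f_R0 (fun i => w i * L i) n).
Proof.
  induction n; intros H.
  - simpl. apply (is_lim_scal_l (f 0%nat) (w 0%nat) x (L 0%nat)). apply H; lia.
  - simpl. apply is_lim_plus'.
    + apply IHn. intros; apply H; lia.
    + apply (is_lim_scal_l (f (S n)) (w (S n)) x (L (S n))). apply H; lia.
Qed.

Lemma sum_cont (w : nat -> R) (f : nat -> R -> R) n x :
  (forall j, (j <= n)%nat -> continuity_pt (f j) x) ->
  continuity_pt (fun y => sum_f_R0 (fun i => w i * f i y) n) x.
Proof.
  induction n; intros H.
  - simpl. apply (continuity_pt_scal (f 0%nat) (w 0%nat)). apply H; lia.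
  - simpl. apply (continuity_pt_plus (fun y => sum_f_R0 (fun i => w i * f i y) n)
      (mult_real_fct (w (S n)) (f (S n)))).
    + apply IHn. intros; apply H; lia.
    + apply continuity_pt_scal. apply H; lia.
Qed.

Lemma sum_w_const (w : nat -> R) c n : sum_f_R0 (fun i => w i * c) n = sum_f_R0 w n * c.
Proof. induction n; simpl; [ring | rewrite IHn; ring]. Qed.

Theorem proposition5 (M : nat) (f : nat -> R -> R) (w : nat -> R) (p : R) :
  (1 <= M)%nat ->
  (forall i, (i < M)%nat -> is_cdf (f i)) ->
  (forall i, (i < M)%nat -> forall x, continuity_pt (f i) x) ->
  (forall i, (i < M)%nat -> strictly_increasing (f i)) ->
  (forall i, (i < M)%nat -> 0 < w i) ->
  sum_f_R0 w (M - 1) = 1 ->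
  0 < p < 1 ->
  (forall i, (i < M)%nat -> p - (1 - w i) >= 0 ->
     Rbar_le (quantile (f i) (p - (1 - w i))) (quantile (mixture M w f) p)) /\
  (forall i, (i < M)%nat -> p + (1 - w i) <= 1 ->
     Rbar_le (quantile (mixture M w f) p) (quantile (f i) (p + (1 - w i)))).
Proof.
  intros HM Hcdf Hcont Hinc Hw Hsum Hp.
  set (F := mixture M w f).
  assert (HiM : forall j, (j <= M - 1)%nat -> (j < M)%nat) by (intros; lia).
  assert (Hb : forall j x, (j < M)%nat -> 0 <= f j x <= 1) by (intros j x Hj; apply (Hcdf j Hj)).
  assert (Hwle : forall i, (i < M)%nat -> w i <= 1).
  { intros i Hi. rewrite <- Hsum. apply term_le; [intros j Hj; left; apply Hw; lia | lia]. }
  assert (Fge : forall i x, (i < M)%nat -> w i * f i x <= F x).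
  { intros i x Hi. unfold F, mixture. apply (term_le (fun j => w j * f j x)); [|lia].
    intros j Hj. apply Rmult_le_pos; [left; apply Hw; lia | apply Hb; lia]. }
  assert (Fle : forall i x, (i < M)%nat -> F x <= w i * f i x + (1 - w i)).
  { intros i x Hi.
    assert (H := term_le (fun j => w j * (1 - f j x)) (M - 1) i).
    simpl in H. rewrite sum_diff, Hsum in H. fold (mixture M w f x) in H. fold F in H.
    assert (w i * (1 - f i x) <= 1 - F x); [|lra].
    apply H; [|lia]. intros j Hj. apply Rmult_le_pos; [left; apply Hw; lia|].
    assert (Hj' := Hb j x ltac:(lia)). lra. }
  assert (HFsol : exists x, quantile F p = Finite x /\ F x = p).
  { apply quantile_spec; [lra|]. apply exists_sol.
    - intro x. unfold F, mixture. apply sum_cont. intros j Hj. apply Hcont; lia.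
    - apply lim_lo; [|lra].
      assert (H := sum_lim w f m_infty (fun _ => 0) (M - 1)).
      cbv beta in H; rewrite sum_w_const, Rmult_0_r in H. apply H.
      intros j Hj. apply (Hcdf j ltac:(lia)).
    - apply lim_hi; [|lra].
      assert (H := sum_lim w f p_infty (fun _ => 1) (M - 1)).
      cbv beta in H; rewrite sum_w_const, Hsum, Rmult_1_r in H. apply H.
      intros j Hj. apply (Hcdf j ltac:(lia)). }
  destruct HFsol as [x0 [Hq0 HF0]].
  assert (fsol : forall i q, (i < M)%nat -> 0 < q < 1 -> exists x, quantile (f i) q = Finite x /\ f i x = q).
  { intros i q Hi Hq. apply quantile_spec; [lra|]. apply exists_sol.
    - apply Hcont; exact Hi.
    - apply lim_lo; [apply (Hcdf i Hi) | lra].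
    - apply lim_hi; [apply (Hcdf i Hi) | lra]. }
  split.
  - intros i Hi Hq. rewrite Hq0.
    assert (Hwi := Hwle i Hi).
    destruct (Req_dec (p - (1 - w i)) 0) as [E|E].
    + unfold quantile. destruct (Rle_dec _ 0); [simpl; exact I | lra].
    + destruct (fsol i (p - (1 - w i)) Hi ltac:(lra)) as [a [Ha Hfa]].
      rewrite Ha. simpl. destruct (Rle_lt_dec a x0) as [Hle|Hlt]; [exact Hle|].
      exfalso. assert (Hs := Hinc i Hi x0 a Hlt).
      assert (H1 := Fle i x0 Hi). assert (Hwp := Hw i Hi).
      assert (w i * f i x0 < w i * (p - (1 - w i))) by (apply Rmult_lt_compat_l; lra).
      assert (w i * (p - (1 - w i)) <= p - (1 - w i)).
      { assert (0 <= (1 - w i) * (p - (1 - w i))) by (apply Rmult_le_pos; lra). lra. }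
      fold F in H1. lra.
  - intros i Hi Hq. rewrite Hq0.
    assert (Hwi := Hwle i Hi).
    destruct (Req_dec (p + (1 - w i)) 1) as [E|E].
    + unfold quantile. destruct (Rle_dec _ 0); [lra|]. destruct (Rle_dec 1 _); [simpl; exact I | lra].
    + destruct (fsol i (p + (1 - w i)) Hi ltac:(lra)) as [b [Hb' Hfb]].
      rewrite Hb'. simpl. destruct (Rle_lt_dec x0 b) as [Hle|Hlt]; [exact Hle|].
      exfalso. assert (Hs := Hinc i Hi b x0 Hlt).
      assert (H1 := Fge i x0 Hi). assert (Hwp := Hw i Hi).
      assert (w i * (p + (1 - w i)) < w i * f i x0) by (apply Rmult_lt_compat_l; lra).
      assert (p <= w i * (p + (1 - w i))).
      { assert (0 <= (1 - w i) * (1 - (p + (1 - w i)))) by (apply Rmult_le_pos; lra). lra. }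
      fold F in H1. lra.
Qed.
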